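(* Let $A$ and $B$ be dendroidally ordered sets, let $y$ be a leaf of $A$, and form the grafting $A\circ B$, i.e. the pushout in $\mathbf{bPos}$ of $A\leftarrow\star\rightarrow B$ where $\star\to A$ picks $y$ and $\star\to B$ picks the root of $B$. Then $A\circ B$ is again a dendroidally ordered set, and it is also a pushout of the same diagram in the full subcategory $\Omega\subseteq\mathbf{bPos}$ of dendroidally ordered sets.
   Context: $A^*$ denotes the free monoid (non-commutative setting) or free commutative monoid (commutative setting) on $A$. A broad poset: $R\subseteq A^*\times A$ (written $\le$) with reflexivity, transitivity (if $a_1\cdots a_n\le a$ and $b_i\le a_i$, $b_i\in A^*$, then $b_1\cdots b_n\le a$), antisymmetry on $A$; monotone maps: $b\le a\Rightarrow f(b)\le f(a)$. $\star$ is the singleton broad poset with only the relation $*\le *$; monotone maps $\star\to A$ correspond to elements of $A$. Extended order on $A^*$: $a\le b$ iff $b=b_1\cdots b_n$ ($b_i\in A$), $a=a_1\cdots a_n$ with $a_i\le b_i$. Descendant: $b\le_d a$ iff some $b'\in A^*$ with $b'\le a$ contains $b$. $\hat a=\{b\in A^*:b<a\}$; $a$ is a leaf if $\hat a=\emptyset$; $a$ has children if $\hat a$ has a maximum $a^\uparrow$ (elements of $a^\uparrow$ are children). A dendroidally ordered set is a broad poset with finitely many relations that is simple ($a_1\cdots a_n\le a$ implies the $a_i$ are pairwise distinct), has a root (an element of which every element is a descendant), and in which every non-leaf has children. $\Omega$ is the full subcategory of $\mathbf{bPos}$ on dendroidally ordered sets. Explicitly, assuming $A\cap B=\{y\}$,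 $A\circ B$ is the set $A\cup B$ where $z\le x$ iff it holds in $A$ or in $B$, or $z=a_1ba_2$ with $a_1,a_2\in A^*$, $b\in B^*$, $b\le y$ in $B$ and $a_1ya_2\le x$ in $A$. *)

(* Defs.v *)
From Stdlib Require Import List Permutation ClassicalEpsilon.
Import ListNotations.

(* [comm = false]: non-commutative (planar) setting, A^* = free monoid (lists);
   [comm = true]: commutative setting, A^* = free commutative monoid,
   represented by lists taken up to permutation. *)
Definition weq (comm : bool) {T : Type} (u v : list T) : Prop :=
  if comm then Permutation u v else u = v.

Section BPos.
Variable comm : bool.
Variable T : Type.
Variable le : list T -> T -> Prop.

Definition is_bposet : Prop :=
  (* well defined on the free commutative monoid in the commutative setting *)
  (comm = true -> forall w w' a, le w a -> Permutation w w' -> le w' a) /\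
  (forall a, le [a] a) /\
  (forall (w : list T) (a : T) (bs : list (list T)),
      le w a -> Forall2 le bs w -> le (concat bs) a) /\
  (forall a b, le [a] b -> le [b] a -> a = b).

Definition blt (w : list T) (a : T) : Prop := le w a /\ w <> [a].

Definition wle (u v : list T) : Prop :=
  exists ws : list (list T), Forall2 le ws v /\ weq comm u (concat ws).

Definition desc (b a : T) : Prop := exists w, le w a /\ In b w.

Definition is_leaf (a : T) : Prop := forall w, ~ blt w a.

Definition is_root (r : T) : Prop := forall a, desc a r.

Definition has_children (a : T) : Prop :=
  exists m, blt m a /\ forall w, blt w a -> wle w m.

Definition finitely_many_relations : Prop :=
  exists L : list (list T * T), forall w a, le w a -> In (w, a) L.

Definition simple : Prop := forall w a, le w a -> NoDup w.

Definition is_dos : Prop :=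
  is_bposet /\ finitely_many_relations /\ simple /\
  (exists r, is_root r) /\ (forall a, ~ is_leaf a -> has_children a).

End BPos.

Arguments is_bposet comm {T} le.
Arguments blt {T} le w a.
Arguments wle comm {T} le u v.
Arguments desc {T} le b a.
Arguments is_leaf {T} le a.
Arguments is_root {T} le r.
Arguments has_children comm {T} le a.
Arguments finitely_many_relations {T} le.
Arguments simple {T} le.
Arguments is_dos comm {T} le.

Definition monotone {T U : Type} (leT : list T -> T -> Prop)
  (leU : list U -> U -> Prop) (f : T -> U) : Prop :=
  forall w a, leT w a -> leU (map f w) (f a).

(* Grafting A ∘ B: the underlying set is A ∪ B with y ∈ A identified with
   the root rB of B; realised as A + (B \ {rB}). *)
Definition graft_T (A B : Type) (rB : B) : Type :=
  (A + {b : B | b <> rB})%type.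

Definition graft_inA {A B : Type} (rB : B) (a : A) : graft_T A B rB := inl a.

Definition graft_inB {A B : Type} (y : A) (rB : B) (b : B) : graft_T A B rB :=
  match excluded_middle_informative (b = rB) with
  | left _ => inl y
  | right h => inr (exist _ b h)
  end.

Definition graft_le (comm : bool) {A B : Type}
  (leA : list A -> A -> Prop) (leB : list B -> B -> Prop) (y : A) (rB : B)
  (z : list (graft_T A B rB)) (x : graft_T A B rB) : Prop :=
  (exists w a, leA w a /\ weq comm z (map (graft_inA rB) w) /\ x = graft_inA rB a)
  \/ (exists w b, leB w b /\ weq comm z (map (graft_inB y rB) w)
                  /\ x = graft_inB y rB b)
  \/ (exists a1 a2 bw a, leB bw rB /\ leA (a1 ++ y :: a2) a /\
        weq comm z (map (graft_inA rB) a1 ++ map (graft_inB y rB) bw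
                     ++ map (graft_inA rB) a2)
        /\ x = graft_inA rB a).

(* Main.v *)
Require Import Defs.
From Stdlib Require Import List Permutation ClassicalEpsilon ProofIrrelevance Classical.
Import ListNotations.

Lemma weq_refl c {T} (l : list T) : weq c l l.
Proof. destruct c; simpl; auto. Qed.
Lemma weq_sym c {T} (l l' : list T) : weq c l l' -> weq c l' l.
Proof. destruct c; simpl; intros; subst; auto using Permutation_sym. Qed.
Lemma weq_trans c {T} (l l' l'' : list T) : weq c l l' -> weq c l' l'' -> weq c l l''.
Proof. destruct c; simpl; intros; subst; eauto using Permutation_trans. Qed.
Lemma weq_map c {T U} (f : T -> U) l l' : weq c l l' -> weq c (map f l) (map f l').
Proof. destruct c; simpl; intros; subst; auto using Permutation_map. Qed.
Lemma weq_app c {T} (l1 l2 l1' l2' : list T) : weq c l1 l1' -> weq c l2 l2' -> weq c (l1++l2) (l1'++l2').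
Proof. destruct c; simpl; intros; subst; auto using Permutation_app. Qed.
Lemma weq_concat c {T} (l l' : list (list T)) : weq c l l' -> weq c (concat l) (concat l').
Proof. destruct c; simpl; intros; subst; auto.
  induction H; simpl; auto. apply Permutation_app_head; auto.
  rewrite !app_assoc. apply Permutation_app_tail, Permutation_app_comm.
  eauto using Permutation_trans. Qed.
Lemma weq_concat2 c {T} (l l' : list (list T)) : Forall2 (weq c) l l' -> weq c (concat l) (concat l').
Proof. induction 1; simpl. apply weq_refl. apply weq_app; auto. Qed.
Lemma weq_In c {T} (l l' : list T) x : weq c l l' -> In x l -> In x l'.
Proof. destruct c; simpl; intros; subst; eauto using Permutation_in. Qed.
Lemma weq_NoDup c {T} (l l' : list T) : weq c l l' -> NoDup l -> NoDup l'.
Proof. destruct c; simpl; intros; subst; eauto using Permutation_NoDup. Qed.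
Lemma weq_single c {T} (x : T) l : weq c [x] l -> l = [x].
Proof. destruct c; simpl; intros; subst; auto using Permutation_length_1_inv. Qed.
Lemma weq_single' c {T} (x : T) l : weq c l [x] -> l = [x].
Proof. intros; apply weq_single with c; apply weq_sym; auto. Qed.
Lemma weq_nil c {T} (l : list T) : weq c [] l -> l = [].
Proof. destruct c; simpl; intros; subst; auto using Permutation_nil. Qed.

Lemma Forall2_perm_r {X Y} (R : X -> Y -> Prop) xs l l' :
  Forall2 R xs l -> Permutation l l' -> exists xs', Permutation xs xs' /\ Forall2 R xs' l'.
Proof.
  intros HF HP. revert xs HF. induction HP; intros xs HF.
  - inversion HF; subst. exists []; auto.
  - inversion HF; subst. destruct (IHHP _ H3) as [xs' [P F]].
    exists (x0 :: xs'); auto.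
  - inversion HF as [|u ? t ? ? H3]; subst. inversion H3 as [|v ? s ? ? ?]; subst. exists (v :: u :: s); split; auto.
    constructor.
  - destruct (IHHP1 _ HF) as [xs1 [P1 F1]]. destruct (IHHP2 _ F1) as [xs2 [P2 F2]].
    exists xs2; split; eauto using Permutation_trans.
Qed.

Lemma Forall2_weq_r c {X Y} (R : X -> Y -> Prop) xs l l' :
  Forall2 R xs l -> weq c l l' -> exists xs', weq c xs xs' /\ Forall2 R xs' l'.
Proof. destruct c; simpl; intros; subst; eauto using Forall2_perm_r. Qed.

Lemma Forall2_concat_split {X Y} (R : X -> Y -> Prop) bs (ps : list (list Y)) :
  Forall2 R bs (concat ps) -> exists css, bs = concat css /\ Forall2 (Forall2 R) css ps.
Proof.
  revert bs; induction ps as [|p ps IH]; simpl; intros bs H.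
  - inversion H; subst. exists []; auto.
  - apply Forall2_app_inv_r in H as [l1 [l2 [H1 [H2 ->]]]].
    destruct (IH _ H2) as [css [-> F]]. exists (l1 :: css); simpl; auto.
Qed.

Lemma Forall2_concat {X Y} (R : X -> Y -> Prop) xss yss :
  Forall2 (Forall2 R) xss yss -> Forall2 R (concat xss) (concat yss).
Proof. induction 1; simpl; auto using Forall2_app. Qed.

Lemma Forall2_map_l {X Y Z} (R : Z -> Y -> Prop) (f : X -> Z) xs ys :
  Forall2 (fun x y => R (f x) y) xs ys -> Forall2 R (map f xs) ys.
Proof. induction 1; simpl; auto. Qed.
Lemma Forall2_map_r {X Y Z} (R : X -> Z -> Prop) (f : Y -> Z) xs ys :
  Forall2 (fun x y => R x (f y)) xs ys -> Forall2 R xs (map f ys).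
Proof. induction 1; simpl; auto. Qed.
Lemma Forall2_map_r_inv {X Y Z} (R : X -> Z -> Prop) (f : Y -> Z) xs ys :
  Forall2 R xs (map f ys) -> Forall2 (fun x y => R x (f y)) xs ys.
Proof. revert xs; induction ys; simpl; intros xs H; inversion H; subst; auto. Qed.
Lemma Forall2_diag {X} (R : X -> X -> Prop) xs : (forall x, In x xs -> R x x) -> Forall2 R xs xs.
Proof. induction xs; simpl; auto. Qed.
Lemma Forall2_impl' {X Y} (R S : X -> Y -> Prop) xs ys :
  (forall x y, In y ys -> R x y -> S x y) -> Forall2 R xs ys -> Forall2 S xs ys.
Proof. intros H F; induction F; simpl in *; auto. Qed.

Lemma concat_single {X} (l : list X) : concat (map (fun x => [x]) l) = l.
Proof. induction l; simpl; f_equal; auto. Qed.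

Lemma bp_weq c {T} (le : list T -> T -> Prop) w w' a :
  is_bposet c le -> le w a -> weq c w w' -> le w' a.
Proof. intros [P _] H E. destruct c; simpl in E; subst; eauto. Qed.

Lemma bp_subst c {T} (le : list T -> T -> Prop) w1 w2 x a v :
  is_bposet c le -> le (w1 ++ x :: w2) a -> le v x -> le (w1 ++ v ++ w2) a.
Proof.
  intros (_ & R & Tr & _) H Hv.
  replace (w1 ++ v ++ w2) with (concat (map (fun x => [x]) w1 ++ [v] ++ map (fun x => [x]) w2)).
  - apply (Tr _ _ _ H). apply Forall2_app; [|constructor; auto];
    apply Forall2_map_l; apply Forall2_diag; auto.
  - rewrite !concat_app, !concat_single. simpl. rewrite app_nil_r. auto.
Qed.

Lemma nodup_app_disj {X} (l1 l2 : list X) x : NoDup (l1 ++ l2) -> In x l1 -> In x l2 -> False.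
Proof.
  induction l1; simpl; intros H H1 H2; [auto|].
  inversion H as [|? ? Hn Hd]; subst. destruct H1; subst; eauto.
  apply Hn; apply in_or_app; auto.
Qed.

Lemma self_in c {T} (le : list T -> T -> Prop) v x :
  is_bposet c le -> simple le -> le v x -> In x v -> v = [x].
Proof.
  intros BP S H Hin. apply in_split in Hin as [v1 [v2 ->]].
  pose proof (bp_subst c le v1 v2 x x _ BP H H) as H2.
  apply S in H2.
  destruct v1 as [|u v1].
  - destruct v2 as [|u v2]; auto. exfalso.
    apply (nodup_app_disj (x :: u :: v2) (u :: v2) u); simpl; auto.
  - exfalso. apply (nodup_app_disj (u :: v1) ((u :: v1 ++ x :: v2) ++ v2) u); simpl; auto.
Qed.

Lemma cycle_eq c {T} (le : list T -> T -> Prop) wa wa' a a' :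
  is_bposet c le -> simple le -> le wa a' -> In a wa -> le wa' a -> In a' wa' -> a = a'.
Proof.
  intros BP S H1 I1 H2 I2. pose proof BP as (_ & _ & _ & AS).
  apply in_split in I1 as [w1 [w2 ->]].
  pose proof (bp_subst c le w1 w2 a a' wa' BP H1 H2) as H3.
  assert (I3 : In a' (w1 ++ wa' ++ w2)) by (apply in_or_app; right; apply in_or_app; auto).
  pose proof (self_in c le _ _ BP S H3 I3) as E.
  destruct w1 as [|u w1]; simpl in E.
  - destruct wa' as [|u wa']; [destruct I2|]. simpl in E. inversion E; subst.
    apply app_eq_nil in H4 as [-> ->]. apply AS; auto.
  - inversion E; subst. apply app_eq_nil in H4 as [_ [E2 _]%app_eq_nil]. subst; destruct I2.
Qed.

Lemma leaf_eq {T} (le : list T -> T -> Prop) w a : is_leaf le a -> le w a -> w = [a].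
Proof. intros L H. destruct (classic (w = [a])); auto. exfalso; apply (L w); split; auto. Qed.

Fixpoint choices {X} (os : list (list X)) : list (list X) :=
  match os with [] => [[]] | o :: os => flat_map (fun p => map (cons p) (choices os)) o end.
Lemma choices_spec {X} (ps : list X) os : Forall2 (fun p o => In p o) ps os -> In ps (choices os).
Proof. induction 1; simpl; auto. apply in_flat_map. exists x; split; auto. apply in_map; auto. Qed.

Fixpoint ins {X} (x : X) (l : list X) : list (list X) :=
  match l with [] => [[x]] | h :: t => (x :: h :: t) :: map (cons h) (ins x t) end.
Lemma ins_spec {X} (x : X) l1 l2 : In (l1 ++ x :: l2) (ins x (l1 ++ l2)).
Proof. induction l1; simpl. destruct l2; simpl; auto. right. apply in_map; auto. Qed.
Fixpoint perms {X} (l : list X) : list (list X) :=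
  match l with [] => [[]] | x :: t => flat_map (ins x) (perms t) end.
Lemma perms_spec {X} (l l' : list X) : Permutation l l' -> In l' (perms l).
Proof.
  revert l'; induction l as [|x t IH]; simpl; intros l' P.
  - apply Permutation_nil in P; subst; auto.
  - destruct (Permutation_vs_cons_inv (Permutation_sym P)) as [l1 [l2 ->]].
    apply Permutation_cons_app_inv in P. apply in_flat_map. exists (l1 ++ l2); split; auto.
    apply ins_spec.
Qed.
Definition wl {X} (c : bool) (l : list X) := if c then perms l else [l].
Lemma wl_spec {X} c (z l : list X) : weq c z l -> In z (wl c l).
Proof. destruct c; simpl; intros; subst; auto. apply perms_spec, Permutation_sym; auto. Qed.

Lemma NoDup_map_inj {X Y} (f : X -> Y) l : (forall a b, f a = f b -> a = b) -> NoDup l -> NoDup (map f l).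
Proof.
  intros I; induction 1; simpl; constructor; auto.
  intros [z [E Hz]]%in_map_iff. apply I in E; subst; auto.
Qed.

Lemma map_single {X Y} (f : X -> Y) l z : map f l = [z] -> exists x, l = [x] /\ f x = z.
Proof. destruct l as [|x [|]]; simpl; intros H; inversion H; eauto. Qed.

Lemma concat_concat {X} (l : list (list (list X))) : concat (concat l) = concat (map (@concat X) l).
Proof. induction l; simpl; auto. rewrite concat_app; f_equal; auto. Qed.

Section G.
Variable comm : bool.
Variables A B : Type.
Variable leA : list A -> A -> Prop.
Variable leB : list B -> B -> Prop.
Variable y : A.
Variable rB : B.
Hypothesis HA : is_dos comm leA.
Hypothesis HB : is_dos comm leB.
Hypothesis Hy : is_leaf leA y.
Hypothesis Hr : is_root leB rB.

Let T := graft_T A B rB.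
Let iB := graft_inB y rB.
Let le := graft_le comm leA leB y rB.

Lemma A_bp : is_bposet comm leA. Proof. apply HA. Qed.
Lemma B_bp : is_bposet comm leB. Proof. apply HB. Qed.
Lemma A_simple : simple leA. Proof. apply HA. Qed.
Lemma B_simple : simple leB. Proof. apply HB. Qed.
Lemma A_refl a : leA [a] a. Proof. apply A_bp. Qed.
Lemma B_refl b : leB [b] b. Proof. apply B_bp. Qed.
Lemma A_trans w a bs : leA w a -> Forall2 leA bs w -> leA (concat bs) a.
Proof. apply A_bp. Qed.
Lemma B_trans w a bs : leB w a -> Forall2 leB bs w -> leB (concat bs) a.
Proof. apply B_bp. Qed.

Lemma iB_rB : iB rB = inl y.
Proof. unfold iB, graft_inB. destruct (excluded_middle_informative (rB = rB)); congruence. Qed.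
Lemma iB_ne (b : {b : B | b <> rB}) : iB (proj1_sig b) = inr b.
Proof. unfold iB, graft_inB. destruct b as [b h]; simpl.
  destruct (excluded_middle_informative (b = rB)); [congruence|].
  f_equal. f_equal. apply proof_irrelevance. Qed.
Lemma iB_inl b a : iB b = inl a -> b = rB /\ a = y.
Proof. unfold iB, graft_inB. destruct (excluded_middle_informative (b = rB)); intros H; inversion H; auto. Qed.
Lemma iB_inj b b' : iB b = iB b' -> b = b'.
Proof. unfold iB, graft_inB.
  destruct (excluded_middle_informative (b = rB)), (excluded_middle_informative (b' = rB));
  intros H; inversion H; congruence. Qed.
Lemma cases (x : T) : (exists b, x = iB b) \/ (exists a, x = inl a /\ a <> y).
Proof. destruct x as [a|b].
  - destruct (classic (a = y)); [subst; left; exists rB; rewrite iB_rB; auto|right; eauto].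
  - left; exists (proj1_sig b); rewrite iB_ne; auto. Qed.

Definition Sub (p : list T) (a : A) : Prop :=
  p = [inl a] \/ (a = y /\ exists bw, leB bw rB /\ p = map iB bw).

Definition NF (z : list T) (x : T) : Prop :=
  (exists a wa ps, x = inl a /\ leA wa a /\ Forall2 Sub ps wa /\ weq comm z (concat ps)) \/
  (exists b w, x = iB b /\ leB w b /\ weq comm z (map iB w)).

Definition sg (a : A) : list T := [inl a].
Lemma concat_sg wa : concat (map sg wa) = map (graft_inA rB) wa.
Proof. induction wa; simpl; f_equal; auto. Qed.
Lemma Sub_sg wa : Forall2 Sub (map sg wa) wa.
Proof. apply Forall2_map_l, Forall2_diag. intros; left; auto. Qed.

Lemma le_NF z x : le z x -> NF z x.
Proof.
  intros [(w & a & H1 & H2 & ->)|[(w & b & H1 & H2 & ->)|(a1 & a2 & bw & a & H1 & H2 & H3 & ->)]].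
  - left. exists a, w, (map sg w). repeat split; auto using Sub_sg. rewrite concat_sg; auto.
  - right. eauto.
  - left. exists a, (a1 ++ y :: a2), (map sg a1 ++ [map iB bw] ++ map sg a2).
    repeat split; auto.
    + apply Forall2_app; [apply Sub_sg|]. constructor; [right; eauto|apply Sub_sg].
    + rewrite !concat_app, !concat_sg. simpl. rewrite app_nil_r. auto.
Qed.

Lemma Sub_shape ps wa : Forall2 Sub ps wa -> NoDup wa ->
  concat ps = map (graft_inA rB) wa \/
  exists a1 a2 bw, wa = a1 ++ y :: a2 /\ leB bw rB /\
     concat ps = map (graft_inA rB) a1 ++ map iB bw ++ map (graft_inA rB) a2.
Proof.
  induction 1 as [|p a ps wa HS HF IH]; intros ND; simpl; auto.
  inversion ND as [|? ? Hn ND']; subst. destruct (IH ND') as [E|(a1 & a2 & bw & E1 & E2 & E3)].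
  - destruct HS as [->|[-> (bw & Hb & ->)]].
    + left. simpl. rewrite E; auto.
    + right. exists [], wa, bw. simpl; rewrite E; auto.
  - destruct HS as [->|[-> (bw' & Hb & ->)]].
    + right. exists (a :: a1), a2, bw. subst; simpl. rewrite E3; auto.
    + exfalso; apply Hn; subst; apply in_or_app; simpl; auto.
Qed.

Lemma NF_le z x : NF z x -> le z x.
Proof.
  intros [(a & wa & ps & -> & H1 & H2 & H3)|(b & w & -> & H1 & H2)].
  - destruct (Sub_shape ps wa H2 (A_simple _ _ H1)) as [E|(a1 & a2 & bw & E1 & E2 & E3)];
      [rewrite E in H3|rewrite E3 in H3].
    + left. exists wa, a. auto.
    + right; right. exists a1, a2, bw, a. subst; auto.
  - right; left. exists w, b; auto.
Qed.

Lemma NF_B z b : NF z (iB b) -> exists v, leB v b /\ weq comm z (map iB v).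
Proof.
  intros [(a & wa & ps & E & H1 & H2 & H3)|(b' & w & E & H1 & H2)].
  - apply iB_inl in E as [-> ->]. apply (leaf_eq _ _ _ Hy) in H1; subst.
    inversion H2 as [|p ? ? ? HS HF]; subst. inversion HF; subst. simpl in H3.
    rewrite app_nil_r in H3.
    destruct HS as [->|[_ (bw & Hb & ->)]].
    + exists [rB]; split; [apply B_refl|]. simpl; rewrite iB_rB; auto.
    + eauto.
  - apply iB_inj in E; subst; eauto.
Qed.

Lemma NF_A z a : NF z (inl a) -> exists wa ps, leA wa a /\ Forall2 Sub ps wa /\ weq comm z (concat ps).
Proof.
  intros [(a' & wa & ps & E & H1 & H2 & H3)|(b' & w & E & H1 & H2)].
  - inversion E; subst; eauto.
  - symmetry in E; apply iB_inl in E as [-> ->].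
    exists [y], [map iB w]. split; [apply A_refl|]. split.
    + constructor; [right; eauto|constructor].
    + simpl; rewrite app_nil_r; auto.
Qed.

Lemma chunkB cs bw : Forall2 (fun c b => NF c (iB b)) cs bw ->
  exists vs, Forall2 leB vs bw /\ weq comm (concat cs) (map iB (concat vs)).
Proof.
  induction 1 as [|c b cs bw H HF IH]; simpl.
  - exists []; split; auto. apply weq_refl.
  - destruct IH as [vs [F E]]. apply NF_B in H as [v [Hv Ev]].
    exists (v :: vs); split; auto. simpl. rewrite map_app. apply weq_app; auto.
Qed.

Lemma chunk cs p a : Forall2 NF cs p -> Sub p a ->
  exists wa ps, leA wa a /\ Forall2 Sub ps wa /\ weq comm (concat cs) (concat ps).
Proof.
  intros F [->|[-> (bw & Hb & ->)]].
  - inversion F as [|c ? ? ? Hc Hn]; subst. inversion Hn; subst. simpl. rewrite app_nil_r.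
    apply NF_A; auto.
  - apply Forall2_map_r_inv in F. destruct (chunkB _ _ F) as [vs [F2 E]].
    exists [y], [map iB (concat vs)]. split; [apply A_refl|]. split.
    + constructor; [right; split; auto; exists (concat vs); split; eauto using B_trans|constructor].
    + simpl; rewrite app_nil_r; auto.
Qed.

Lemma chunks css ps wa : Forall2 (Forall2 NF) css ps -> Forall2 Sub ps wa ->
  exists was pss, Forall2 leA was wa /\ Forall2 Sub (concat pss) (concat was) /\
     weq comm (concat (concat css)) (concat (concat pss)).
Proof.
  intros F1 F2. revert css F1. induction F2 as [|p a ps wa HS HF IH]; intros css F1;
    inversion F1 as [|cs ? css' ? Hc Hcs]; subst.
  - exists [], []; simpl; repeat split; auto. apply weq_refl.
  - destruct (IH _ Hcs) as (was & pss & G1 & G2 & G3).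
    destruct (chunk _ _ _ Hc HS) as (wa' & ps' & K1 & K2 & K3).
    exists (wa' :: was), (ps' :: pss). simpl. repeat split; auto.
    + apply Forall2_app; auto.
    + rewrite !concat_app. apply weq_app; auto.
Qed.

Lemma NF_trans w x bs : NF w x -> Forall2 NF bs w -> NF (concat bs) x.
Proof.
  intros [(a & wa & ps & -> & H1 & H2 & H3)|(b & v & -> & H1 & H2)] F.
  - destruct (Forall2_weq_r comm _ _ _ _ F H3) as [bs' [E F']].
    destruct (Forall2_concat_split _ _ _ F') as [css [-> F'']].
    destruct (chunks _ _ _ F'' H2) as (was & pss & G1 & G2 & G3).
    left. exists a, (concat was), (concat pss). repeat split; eauto using A_trans.
    eapply weq_trans; [apply weq_concat; eauto|auto].
  - destruct (Forall2_weq_r comm _ _ _ _ F H2) as [bs' [E F']].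
    apply Forall2_map_r_inv in F'. destruct (chunkB _ _ F') as [vs [G1 G2]].
    right. exists b, (concat vs). repeat split; eauto using B_trans.
    eapply weq_trans; [apply weq_concat; eauto|auto].
Qed.

Lemma le_trans w x bs : le w x -> Forall2 le bs w -> le (concat bs) x.
Proof.
  intros H F. apply NF_le. apply NF_trans with w; auto using le_NF.
  eapply Forall2_impl; [|eauto]. intros; apply le_NF; auto.
Qed.

Lemma le_refl x : le [x] x.
Proof.
  apply NF_le. destruct (cases x) as [[b ->]|[a [-> _]]].
  - right. exists b, [b]. repeat split; auto using B_refl, weq_refl.
  - left. exists a, [a], [[inl a]]. repeat split; auto using A_refl.
    constructor; [left; auto|constructor]. apply weq_refl.
Qed.

Definition pi (x : T) : A := match x with inl a => a | inr _ => y end.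
Lemma pi_iB b : pi (iB b) = y.
Proof. unfold iB, graft_inB. destruct (excluded_middle_informative (b = rB)); auto. Qed.
Lemma pi_Sub p a x : Sub p a -> In x p -> pi x = a.
Proof.
  intros [->|[-> (bw & _ & ->)]] H.
  - destruct H as [<-|[]]; auto.
  - apply in_map_iff in H as [b [<- _]]; apply pi_iB.
Qed.
Lemma pi_in ps wa x : Forall2 Sub ps wa -> In x (concat ps) -> In (pi x) wa.
Proof.
  induction 1; simpl; [intros []|]. intros [H1|H1]%in_app_or.
  - left; symmetry; eapply pi_Sub; eauto.
  - right; auto.
Qed.

Lemma NF_A_in z zs a : NF zs (inl a) -> In z zs -> exists wa, leA wa a /\ In (pi z) wa.
Proof.
  intros H I. apply NF_A in H as (wa & ps & H1 & H2 & H3).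
  exists wa; split; auto. eapply pi_in; eauto. eapply weq_In; eauto.
Qed.

Lemma le_antisym x x' : le [x] x' -> le [x'] x -> x = x'.
Proof.
  intros H1 H2. apply le_NF in H1, H2.
  assert (AA : forall a a', NF [inl a] (inl a') -> NF [inl a'] (inl a) -> a = a').
  { intros a a' K1 K2.
    destruct (NF_A_in (inl a) _ _ K1) as [w1 [L1 I1]]; [left; auto|].
    destruct (NF_A_in (inl a') _ _ K2) as [w2 [L2 I2]]; [left; auto|].
    simpl in *. eapply cycle_eq; eauto using A_bp, A_simple. }
  assert (BB : forall b b', NF [iB b] (iB b') -> b = b' \/ NF [iB b] (iB b')).
  { auto. }
  destruct (cases x) as [[b ->]|[a [-> Ha]]], (cases x') as [[b' ->]|[a' [-> Ha']]].
  - apply NF_B in H1 as [v [L1 E1]]. apply NF_B in H2 as [v' [L2 E2]].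
    apply weq_single in E1, E2. apply map_single in E1 as [b0 [-> E1]].
    apply map_single in E2 as [b0' [-> E2]]. apply iB_inj in E1, E2; subst.
    f_equal. apply B_bp; auto.
  - exfalso. apply NF_B in H2 as [v [_ E]]. apply weq_single in E.
    apply map_single in E as [b0 [_ E]]. apply iB_inl in E as [_ E]; auto.
  - exfalso. apply NF_B in H1 as [v [_ E]]. apply weq_single in E.
    apply map_single in E as [b0 [_ E]]. apply iB_inl in E as [_ E]; auto.
  - f_equal; auto.
Qed.

Lemma le_bposet : is_bposet comm le.
Proof.
  split; [|split; [|split]].
  - intros Hc w w' a H P. unfold le, graft_le in *.
    assert (K : forall z, weq comm w z -> weq comm w' z).
    { intros z E. eapply weq_trans; [|eauto]. subst comm; simpl; apply Permutation_sym; exact P. }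
    destruct H as [(u & b & H1 & H2 & H3)|[(u & b & H1 & H2 & H3)|(a1 & a2 & bw & b & H1 & H2 & H3 & H4)]].
    + left; exists u, b; auto.
    + right; left; exists u, b; auto.
    + right; right; exists a1, a2, bw, b; auto.
  - apply le_refl.
  - intros; eapply le_trans; eauto.
  - apply le_antisym.
Qed.

Lemma NF_nodup z x : NF z x -> NoDup z.
Proof.
  intros [(a & wa & ps & -> & H1 & H2 & H3)|(b & w & -> & H1 & H2)].
  - eapply weq_NoDup; [apply weq_sym; eauto|].
    pose proof (A_simple _ _ H1) as ND. clear H1 H3.
    induction H2 as [|p a' ps wa HS HF IH]; simpl; [constructor|].
    inversion ND as [|? ? Hn ND']; subst. apply NoDup_app; auto.
    + destruct HS as [->|[-> (bw & Hb & ->)]]; [repeat constructor; auto|].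
      apply NoDup_map_inj; [apply iB_inj|]. eapply B_simple; eauto.
    + intros u I1 I2. apply Hn. rewrite <- (pi_Sub _ _ _ HS I1). eapply pi_in; eauto.
  - eapply weq_NoDup; [apply weq_sym; eauto|].
    apply NoDup_map_inj; [apply iB_inj|]. eapply B_simple; eauto.
Qed.


Lemma le_simple : simple le.
Proof. intros w a H. eapply NF_nodup, le_NF; eauto. Qed.

Lemma le_finite : finitely_many_relations le.
Proof.
  destruct HA as (_ & [LA HLA] & _). destruct HB as (_ & [LB HLB] & _).
  set (opts := fun a : A => [inl a] :: map (fun e : list B * B => map iB (fst e)) LB).
  exists (flat_map (fun e : list A * A => flat_map (fun ps => map (fun z => (z, inl (snd e) : T))
            (wl comm (concat ps))) (choices (map opts (fst e)))) LA ++
          flat_map (fun e : list B * B => map (fun z => (z, iB (snd e))) (wl comm (map iB (fst e)))) LB).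
  intros z x H. apply le_NF in H as [(a & wa & ps & -> & H1 & H2 & H3)|(b & w & -> & H1 & H2)];
    apply in_or_app; [left|right]; apply in_flat_map.
  - exists (wa, a); split; auto. apply in_flat_map. exists ps; split.
    + apply choices_spec. apply Forall2_map_r. eapply Forall2_impl; [|eauto].
      intros p a' [->|[-> (bw & Hb & ->)]]; simpl; auto.
      right. apply in_map_iff. exists (bw, rB); auto.
    + apply in_map_iff. exists z; simpl; split; auto. apply wl_spec; auto.
  - exists (w, b); split; auto. apply in_map_iff. exists z; simpl; split; auto. apply wl_spec; auto.
Qed.

Lemma le_root : exists r, is_root le r.
Proof.
  destruct HA as (_ & _ & _ & [rA HrA] & _). exists (inl rA). intros x.
  destruct (cases x) as [[b ->]|[a [-> _]]].
  - destruct (Hr b) as [bw [Hb Ib]]. destruct (HrA y) as [wa [Hw Iw]].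
    apply in_split in Iw as [a1 [a2 ->]].
    exists (map (graft_inA rB) a1 ++ map iB bw ++ map (graft_inA rB) a2). split.
    + right; right. exists a1, a2, bw, rA. repeat split; auto using weq_refl.
    + apply in_or_app; right; apply in_or_app; left; apply in_map; auto.
  - destruct (HrA a) as [wa [Hw Iw]]. exists (map (graft_inA rB) wa). split.
    + left. exists wa, rA; repeat split; auto using weq_refl.
    + apply in_map with (f := graft_inA rB) in Iw; auto.
Qed.

Lemma group_le pss vs mA : Forall2 (Forall2 Sub) pss vs -> Forall2 leA vs mA ->
  Forall2 le (map (@concat T) pss) (map (graft_inA rB) mA).
Proof.
  intros F1; revert mA; induction F1; intros mA F2; inversion F2; subst; simpl; constructor; auto.
  apply NF_le. left. exists y1, y0, x. repeat split; auto using weq_refl.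
Qed.

Lemma le_children x : ~ is_leaf le x -> has_children comm le x.
Proof.
  intros NL. destruct (cases x) as [[b ->]|[a [-> Ha]]].
  - assert (NLB : ~ is_leaf leB b).
    { intros LB. apply NL. intros w [H1 H2]. apply le_NF, NF_B in H1 as [v [Hv E]].
      apply (leaf_eq _ _ _ LB) in Hv; subst. apply weq_single' in E. auto. }
    destruct HB as (_ & _ & _ & _ & CH). destruct (CH b NLB) as [mB [[M1 M2] M3]].
    exists (map iB mB). split; [split|].
    + apply NF_le; right; exists b, mB; repeat split; auto using weq_refl.
    + intros E. apply map_single in E as [b0 [-> E]]. apply iB_inj in E; subst; auto.
    + intros w [H1 H2]. apply le_NF, NF_B in H1 as [v [Hv E]].
      assert (Nv : v <> [b]) by (intros ->; apply H2; apply weq_single' in E; auto).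
      destruct (M3 v (conj Hv Nv)) as [vs [F Ev]].
      exists (map (map iB) vs). split.
      * apply Forall2_map_l, Forall2_map_r. eapply Forall2_impl; [|eauto].
        intros v' b' H. apply NF_le; right; exists b', v'; repeat split; auto using weq_refl.
      * eapply weq_trans; [eauto|]. rewrite <- concat_map. apply weq_map; auto.
  - assert (NLA : ~ is_leaf leA a).
    { intros LA. apply NL. intros w [H1 H2]. apply le_NF, NF_A in H1 as (wa & ps & Hw & F & E).
      apply (leaf_eq _ _ _ LA) in Hw; subst. inversion F as [|p ? ? ? HS HF]; subst.
      inversion HF; subst. simpl in E. rewrite app_nil_r in E.
      destruct HS as [->|[? _]]; [|auto]. apply weq_single' in E; auto. }
    destruct HA as (_ & _ & _ & _ & CH). destruct (CH a NLA) as [mA [[M1 M2] M3]].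
    exists (map (graft_inA rB) mA). split; [split|].
    + apply NF_le; left; exists a, mA, (map sg mA); repeat split; auto using Sub_sg.
      rewrite concat_sg; apply weq_refl.
    + intros E. apply map_single in E as [a0 [-> E]]. inversion E; subst; auto.
    + intros w [H1 H2]. apply le_NF, NF_A in H1 as (wa & ps & Hw & F & E).
      assert (Nw : wa <> [a]).
      { intros ->. apply H2. inversion F as [|p ? ? ? HS HF]; subst.
        inversion HF; subst. simpl in E. rewrite app_nil_r in E.
        destruct HS as [->|[? _]]; [|contradiction]. apply weq_single' in E; auto. }
      destruct (M3 wa (conj Hw Nw)) as [vs [Fv Ev]].
      destruct (Forall2_weq_r comm _ _ _ _ F Ev) as [ps' [Ep F']].
      destruct (Forall2_concat_split _ _ _ F') as [pss [-> F'']].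
      exists (map (@concat T) pss). split.
      * eapply group_le; eauto.
      * eapply weq_trans; [eauto|]. rewrite <- concat_concat. apply weq_concat; auto.
Qed.

Lemma le_dos : is_dos comm le.
Proof.
  split; [apply le_bposet|split; [apply le_finite|split; [apply le_simple|split]]].
  - apply le_root.
  - apply le_children.
Qed.


Lemma univ (C : Type) (leC : list C -> C -> Prop) : is_dos comm leC ->
   forall (f : A -> C) (g : B -> C),
     monotone leA leC f -> monotone leB leC g -> f y = g rB ->
     exists h : graft_T A B rB -> C,
       monotone le leC h /\
       (forall a, h (graft_inA rB a) = f a) /\
       (forall b, h (iB b) = g b) /\
       (forall h' : graft_T A B rB -> C,
          monotone le leC h' ->
          (forall a, h' (graft_inA rB a) = f a) ->
          (forall b, h' (iB b) = g b) ->
          forall x, h' x = h x).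
Proof.
  intros HC f g Mf Mg Efg. destruct HC as [BC _]. pose proof BC as (_ & RC & TC & _).
  set (h := fun x : graft_T A B rB => match x with inl a => f a | inr b => g (proj1_sig b) end).
  assert (HB' : forall b, h (iB b) = g b).
  { intros b. destruct (classic (b = rB)) as [->|Hb].
    - rewrite iB_rB. simpl. auto.
    - replace b with (proj1_sig (exist (fun b => b <> rB) b Hb)) by auto. rewrite iB_ne. auto. }
  exists h. split; [|split; [|split]]; auto.
  - intros w x H. apply le_NF in H as [(a & wa & ps & -> & H1 & H2 & H3)|(b & v & -> & H1 & H2)].
    + eapply bp_weq; [exact BC| |apply weq_map, weq_sym; eauto].
      rewrite concat_map. apply (TC _ _ _ (Mf _ _ H1)).
      apply Forall2_map_l, Forall2_map_r. eapply Forall2_impl; [|eauto].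
      intros p a' [->|[-> (bw & Hb & ->)]]; simpl; auto.
      rewrite map_map. rewrite Efg. erewrite map_ext; [apply Mg; auto|]. intros; apply HB'.
    + rewrite HB'. eapply bp_weq; [exact BC| |apply weq_map, weq_sym; eauto].
      rewrite map_map. erewrite map_ext; [apply Mg; eauto|]. intros; apply HB'.
  - intros h' _ E1 E2 x. destruct x as [a|b].
    + apply E1.
    + rewrite <- iB_ne, E2, HB'. auto.
Qed.

End G.

Theorem corollary5p1 (comm : bool) (A B : Type)
  (leA : list A -> A -> Prop) (leB : list B -> B -> Prop) (y : A) (rB : B) :
  is_dos comm leA -> is_dos comm leB ->
  is_leaf leA y -> is_root leB rB ->
  (* A ∘ B is a dendroidally ordered set *)
  is_dos comm (graft_le comm leA leB y rB) /\
  (* the cocone A -> A ∘ B <- B over A <- ⋆ -> B *)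
  monotone leA (graft_le comm leA leB y rB) (graft_inA rB) /\
  monotone leB (graft_le comm leA leB y rB) (graft_inB y rB) /\
  graft_inA rB y = graft_inB y rB rB /\
  (* universal property in Ω *)
  (forall (C : Type) (leC : list C -> C -> Prop), is_dos comm leC ->
   forall (f : A -> C) (g : B -> C),
     monotone leA leC f -> monotone leB leC g -> f y = g rB ->
     exists h : graft_T A B rB -> C,
       monotone (graft_le comm leA leB y rB) leC h /\
       (forall a, h (graft_inA rB a) = f a) /\
       (forall b, h (graft_inB y rB b) = g b) /\
       (forall h' : graft_T A B rB -> C,
          monotone (graft_le comm leA leB y rB) leC h' ->
          (forall a, h' (graft_inA rB a) = f a) ->
          (forall b, h' (graft_inB y rB b) = g b) ->
          forall x, h' x = h x)).
Proof.
  intros HA HB Hy Hr. split; [apply le_dos; auto|split; [|split; [|split]]].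
  - intros w a H. left. exists w, a. repeat split; auto using weq_refl.
  - intros w b H. right; left. exists w, b. repeat split; auto using weq_refl.
  - symmetry; apply iB_rB.
  - apply univ; auto.
Qed.
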